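(* Let $G$ be a connected cograph which is $k$-connected, and let $S$ be a minimal vertex separator of $G$ with $|S|=k$, so that $G\setminus S$ has connected components $G_1,\ldots,G_m$ with $m\geq 2$. Then every vertex $x\in S$ is adjacent to every vertex of $V(G)\setminus S$.
   Context: A cograph is a graph that can be built from single vertices by repeatedly taking disjoint unions and joins; equivalently, a graph with no induced path on four vertices. Graphs are finite, simple, undirected. $G\setminus S$ is the subgraph induced on $V(G)\setminus S$. A vertex separator of a connected graph $G$ is a set $S\subset V(G)$ such that $G\setminus S$ is disconnected; it is minimal if no proper subset of $S$ is a vertex separator; a minimum vertex separator is a minimal vertex separator of least size. The paper calls $G$ $k$-connected if there exists a minimum vertex separator of size $k$. *)

(* Defs.v *)
From mathcomp Require Import all_boot.
Set Implicit Arguments. Unset Strict Implicit. Unset Printing Implicit Defensive.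

Definition simple_graph (T : finType) (e : rel T) : Prop :=
  symmetric e /\ irreflexive e.

Definition induced_rel (T : finType) (e : rel T) (A : {set T}) : rel T :=
  [rel x y | [&& e x y, x \in A & y \in A]].

Definition connected_on (T : finType) (e : rel T) (A : {set T}) : Prop :=
  forall x y, x \in A -> y \in A -> connect (induced_rel e A) x y.

Definition connected_graph (T : finType) (e : rel T) : Prop :=
  connected_on e [set: T].

Definition is_separator (T : finType) (e : rel T) (S : {set T}) : Prop :=
  exists x y, [/\ x \notin S, y \notin S & ~~ connect (induced_rel e (~: S)) x y].

Definition minimal_separator (T : finType) (e : rel T) (S : {set T}) : Prop :=
  is_separator e S /\ forall S' : {set T}, S' \proper S -> ~ is_separator e S'.

Definition minimum_separator (T : finType) (e : rel T) (S : {set T}) : Prop :=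
  minimal_separator e S /\
  forall S' : {set T}, minimal_separator e S' -> #|S| <= #|S'|.

(* the paper's "k-connected": there exists a minimum vertex separator of size k *)
Definition k_connected (T : finType) (e : rel T) (k : nat) : Prop :=
  exists S, minimum_separator e S /\ #|S| = k.

Definition cograph (T : finType) (e : rel T) : Prop :=
  ~ exists a b c d : T,
      [/\ e a b, e b c, e c d & [/\ ~~ e a c, ~~ e b d & ~~ e a d]].

(* Main.v *)
Require Import Defs.
From mathcomp Require Import all_boot.

Lemma conn_ind (T : finType) (r : rel T) (P : T -> Prop) x :
  P x -> (forall a b, P a -> r a b -> P b) -> forall y, connect r x y -> P y.
Proof.
move=> Px step y /connectP [p pth ->]; elim: p x Px pth => [|z p IH] x Px //=.
by move/andP=> [rxz pth]; apply: (IH z (step _ _ Px rxz) pth).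
Qed.

Lemma ind_sym (T : finType) (e : rel T) A :
  symmetric e -> symmetric (induced_rel e A).
Proof. by move=> se a b; rewrite /induced_rel /= se; case: (a \in A); case: (b \in A); rewrite ?andbF. Qed.

Theorem lemma2 (T : finType) (e : rel T) (k : nat) (S : {set T}) :
  simple_graph e -> connected_graph e -> cograph e -> k_connected e k ->
  minimal_separator e S -> #|S| = k ->
  forall x y, x \in S -> y \notin S -> e x y.
Proof.
move=> [se ie] _ cog _ [[a [b [aS bS nab]]] minS] _ x y xS yS.
set r := induced_rel e (~: S).
have csym : connect_sym r by apply: sym_connect_sym; apply: ind_sym.
have prop : S :\ x \proper S.
  by apply/properP; split; [exact: subD1set | exists x; rewrite ?in_setD1 ?eqxx].
have notsep := minS _ prop.
have allc : forall u v, u \notin S :\ x -> v \notin S :\ x ->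
    connect (induced_rel e (~: (S :\ x))) u v.
  move=> u v uS vS; apply/negPn/negP => nuv; apply: notsep; exists u, v; by split.
have Hout : forall u, u \notin S -> u \notin S :\ x.
  by move=> u uS; rewrite in_setD1 negb_and uS orbT.
have far : forall v, v \notin S -> exists2 z, z \notin S & ~~ connect r v z.
  move=> v vS; case: (boolP (connect r v a)) => va; last by exists a.
  case: (boolP (connect r v b)) => vb; last by exists b.
  by move: nab; rewrite (connect_trans _ vb) // csym.
have L1 : forall v, v \notin S -> exists z, [/\ z \notin S, e x z & ~~ connect r v z].
  move=> v vS; case: (boolP [exists z, [&& z \notin S, e x z & ~~ connect r v z]]).
    by move/existsP=> [z /and3P [] *]; exists z.
  move/existsPn => H.
  have [z0 z0S nz0] := far v vS.
  have P : forall t, connect (induced_rel e (~: (S :\ x))) v t ->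
      t = x \/ (t \notin S /\ connect r v t).
    apply: conn_ind; first by right.
    move=> t t' [->|[tS vt]] /= /and3P [ett' _]; rewrite !inE negb_and negbK => t'S.
    - case: (eqVneq t' x) => [->|t'x]; first by left.
      have t'S' : t' \notin S by move: t'S; rewrite (negbTE t'x).
      right; split => //; move: (H t'); rewrite t'S' ett' /=; by move/negPn.
    - case: (eqVneq t' x) => [->|t'x]; first by left.
      have t'S' : t' \notin S by move: t'S; rewrite (negbTE t'x).
      right; split => //; apply: connect_trans vt (connect1 _).
      by rewrite /r /induced_rel /= ett' !inE tS t'S'.
  case: (P z0 (allc _ _ (Hout _ vS) (Hout _ z0S))) => [z0x|[_ c]].
    by move: z0S; rewrite z0x xS.
  by move: nz0; rewrite c.
have L0 : forall v, v \notin S -> exists u, [/\ u \notin S, e x u & connect r v u].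
  move=> v vS; case: (boolP [exists z, [&& z \notin S, e x z & connect r v z]]).
    by move/existsP=> [z /and3P [] *]; exists z.
  move/existsPn => H.
  have [z0 z0S nz0] := far v vS.
  have P : forall t, connect (induced_rel e (~: (S :\ x))) v t ->
      t \notin S /\ connect r v t.
    apply: conn_ind; first by split.
    move=> t t' [tS vt] /= /and3P [ett' _]; rewrite !inE negb_and negbK => t'S.
    case: (eqVneq t' x) => [t'x|t'x].
      by move: (H t); rewrite tS -se -t'x ett' vt.
    have t'S' : t' \notin S by move: t'S; rewrite (negbTE t'x).
    split => //; apply: connect_trans vt (connect1 _).
    by rewrite /r /induced_rel /= ett' !inE tS t'S'.
  have [_ c] := P z0 (allc _ _ (Hout _ vS) (Hout _ z0S)).
  by move: nz0; rewrite c.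
apply/negPn/negP => nxy.
have [u [uS xu yu]] := L0 y yS.
have [u' [w [u'S wS [eu'w xu' xw]]]] : exists u' w,
    [/\ u' \notin S, w \notin S & [/\ e u' w, e x u' & ~~ e x w]].
  case: (boolP [exists u', exists w,
     [&& u' \notin S, w \notin S, e u' w, e x u' & ~~ e x w]]).
    by move/existsP=> [u' /existsP [w /and5P [] *]]; exists u', w.
  move/existsPn => H.
  have P : forall t, connect r y t -> ~~ e x t.
    apply: conn_ind => // t t' nxt /and3P [ett' tS t'S].
    apply/negP => xt'; move/existsPn: (H t') => /(_ t).
    by move: tS t'S; rewrite !inE => tS t'S; rewrite t'S tS se ett' xt' nxt.
  by move: (P u yu); rewrite xu.
have [z [zS xz nwz]] := L1 w wS.
apply: cog; exists w, u', x, z; split.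
- by rewrite se.
- by rewrite se.
- done.
- split.
  + by rewrite se.
  + apply/negP => u'z; move: nwz; apply/negP/negPn.
    apply: (connect_trans (y:=u')) (connect1 _) (connect1 _); rewrite /r /induced_rel /= !inE.
      by rewrite se eu'w wS u'S.
    by rewrite u'z u'S zS.
  + apply/negP => wz; move: nwz; apply/negP/negPn; apply: connect1.
    by rewrite /r /induced_rel /= !inE wz wS zS.
Qed.
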